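(* Let $P$ be a poset, $I$ a non-empty index set, and $\mathcal{U}_i$ a maximal join-specification for $P$ for each $i\in I$. Then $\bigcap_{i\in I}\mathcal{U}_i$ is also maximal.
   Context: A join-specification for $P$ is a set $\mathcal{U}\subseteq\wp(P)$ such that $\bigvee S$ exists in $P$ for every $S\in\mathcal{U}$ and $\{p\}\in\mathcal{U}$ for every $p\in P$. A $\mathcal{U}$-ideal is a down-closed $C\subseteq P$ with $\bigvee S\in C$ whenever $S\in\mathcal{U}$, $S\subseteq C$; $\Gamma_{\mathcal{U}}(S)$ is the smallest $\mathcal{U}$-ideal containing $S$. $\mathcal{U}^+=\{S\subseteq P:\bigvee S\text{ exists in }P\text{ and }\bigvee S\in\Gamma_{\mathcal{U}}(S)\}$, and $\mathcal{U}$ is maximal if $\mathcal{U}=\mathcal{U}^+$. *)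

(* Defs.v *)
From Stdlib Require Import Classical.

Set Implicit Arguments.

Record is_poset (P : Type) (le : P -> P -> Prop) : Prop := {
  po_refl : forall x, le x x;
  po_antisym : forall x y, le x y -> le y x -> x = y;
  po_trans : forall x y z, le x y -> le y z -> le x z
}.

Section JoinSpec.
Variables (P : Type) (le : P -> P -> Prop).

Definition is_join (S : P -> Prop) (x : P) : Prop :=
  (forall s, S s -> le s x) /\ (forall y, (forall s, S s -> le s y) -> le x y).

Definition join_exists (S : P -> Prop) : Prop := exists x, is_join S x.

Definition join_spec (U : (P -> Prop) -> Prop) : Prop :=
  (forall S, U S -> join_exists S) /\
  (forall p : P, U (fun q => q = p)).

Definition U_ideal (U : (P -> Prop) -> Prop) (C : P -> Prop) : Prop :=
  (forall x y, le x y -> C y -> C x) /\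
  (forall S x, U S -> (forall s, S s -> C s) -> is_join S x -> C x).

Definition Gamma (U : (P -> Prop) -> Prop) (S : P -> Prop) : P -> Prop :=
  fun x => forall C, U_ideal U C -> (forall s, S s -> C s) -> C x.

Definition Uplus (U : (P -> Prop) -> Prop) : (P -> Prop) -> Prop :=
  fun S => exists x, is_join S x /\ Gamma U S x.

Definition maximal_join_spec (U : (P -> Prop) -> Prop) : Prop :=
  join_spec U /\ (forall S, U S <-> Uplus U S).

End JoinSpec.

(* Main.v *)
Require Import Defs.

Theorem lemma2p24 (P : Type) (le : P -> P -> Prop) (I : Type)
  (U : I -> (P -> Prop) -> Prop) :
  is_poset le ->
  (exists i : I, True) ->
  (forall i, maximal_join_spec le (U i)) ->
  maximal_join_spec le (fun S => forall i, U i S).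
Proof.
  intros _ [i0 _] HU.
  split.
  - split.
    + intros S HS. destruct (HU i0) as [[Hj _] _]. exact (Hj S (HS i0)).
    + intros p i. destruct (HU i) as [[_ Hs] _]. exact (Hs p).
  - intros S. split.
    + intros HS. destruct (HU i0) as [[Hj _] _].
      destruct (Hj S (HS i0)) as [x Hx].
      exists x. split; [exact Hx|].
      intros C [_ HC] HSC. exact (HC S x HS HSC Hx).
    + intros [x [Hx HG]] i. destruct (HU i) as [_ Hm].
      apply (proj2 (Hm S)). exists x. split; [exact Hx|].
      intros C [Hd HC] HSC. apply HG; [|exact HSC].
      split; [exact Hd|].
      intros T y HT HTC Hy. exact (HC T y (HT i) HTC Hy).
Qed.
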